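(* For all odd $n\geqslant3$ and all even $n\geqslant8$, \[ \sum_{i=0}^{\lfloor\frac{n-1}{2}\rfloor}\binom{n}{i+1,\,n-2i-1,\,i}<\sum_{i=0}^{\lfloor\frac{n-1}{2}\rfloor}\binom{n}{i,\,n-2i,\,i}. \]
   Context: $\binom{n}{a,b,c}=\frac{n!}{a!\,b!\,c!}$ denotes the trinomial coefficient for nonnegative integers $a+b+c=n$. *)

(* Defs.v *)
From mathcomp Require Import all_boot.
Set Implicit Arguments. Unset Strict Implicit. Unset Printing Implicit Defensive.

(* Trinomial coefficient n!/(a! b! c!) for a + b + c = n (exact division then). *)
Definition trinom (n a b c : nat) : nat := n`! %/ (a`! * b`! * c`!).

(* Main.v *)
Require Import Defs.
From mathcomp Require Import all_boot.
From mathcomp Require Import zify.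

Definition t n a c := 'C(n, a) * 'C(n - a, c).
Definition T n k := \sum_(0 <= i < n.+1) t n (i + k) i.

Lemma tfact n a c : a + c <= n -> t n a c * (a`! * c`! * (n - a - c)`!) = n`!.
Proof.
move=> h.
have h1 : a <= n by lia. have h2 : c <= n - a by lia.
rewrite -(bin_fact h1) -(bin_fact h2) /t; lia.
Qed.

Lemma tsym n a c : t n a c = t n c a.
Proof.
case: (leqP (a + c) n) => h.
  apply/eqP; rewrite -(eqn_pmul2r (_ : 0 < a`! * c`! * (n - a - c)`!)).
    rewrite tfact // (_ : n - a - c = n - c - a); last lia.
    by rewrite (mulnC a`! c`!) tfact ?(addnC c a).
  by rewrite !muln_gt0 !fact_gt0.
rewrite /t.
case: (leqP a n) => ha.
2: by rewrite (@bin_small n a) // (@bin_small (n - c) a) ?muln0 //; lia.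
case: (leqP c n) => hc.
2: by rewrite (@bin_small n c) // (@bin_small (n - a) c) ?muln0 //; lia.
rewrite [X in _ * X]bin_small; last lia.
by rewrite [X in _ = _ * X]bin_small; [rewrite !muln0|lia].
Qed.

Lemma trinom_t n a b c : a + b + c = n -> trinom n a b c = t n a c.
Proof.
move=> h; have hac : a + c <= n by lia.
rewrite /trinom -(@tfact n a c hac).
rewrite (_ : n - a - c = b); last lia.
rewrite (_ : a`! * b`! * c`! = a`! * c`! * b`!); last lia.
by rewrite mulnK // !muln_gt0 !fact_gt0.
Qed.

Lemma tS n a c : t n.+1 a c = t n a c + (0 < a) * t n a.-1 c + (0 < c) * t n a c.-1.
Proof.
rewrite /t; case: a => [|a] /=.
  rewrite !bin0 !mul1n !subn0 ?add0n ?addn0.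
  by case: c => [|c] /=; rewrite ?bin0 ?mul1n ?mul0n ?addn0 // binS.
rewrite subSS binS mul1n mulnDl.
case: (leqP n a) => ha.
  rewrite (@bin_small n a.+1) //; lia.
have -> : n - a = (n - a.+1).+1 by lia.
case: c => [|c] /=; first by rewrite !bin0 mul0n addn0 addnC.
rewrite mul1n binS mulnDr. lia.
Qed.

Lemma sum_last n k : \sum_(0 <= i < n.+2) t n (i + k) i = T n k.
Proof.
rewrite big_nat_recr //= /t (@bin_small n (n.+1 + k)) ?mul0n ?addn0 //; lia.
Qed.

Lemma T_split n k : T n.+1 k =
  \sum_(0 <= i < n.+2) t n (i + k) i +
  \sum_(0 <= i < n.+2) (0 < i + k) * t n (i + k).-1 i +
  \sum_(0 <= i < n.+2) (0 < i) * t n (i + k) i.-1.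
Proof.
by rewrite /T -!big_split /=; apply: eq_big_nat => i _; rewrite tS.
Qed.

Lemma third n k : \sum_(0 <= i < n.+2) (0 < i) * t n (i + k) i.-1 = T n k.+1.
Proof.
rewrite big_nat_recl // mul0n add0n /T; apply: eq_big_nat => i _.
by rewrite mul1n addSnnS.
Qed.

Lemma T_SS n k : T n.+1 k.+1 = T n k + T n k.+1 + T n k.+2.
Proof.
rewrite T_split sum_last third.
suff -> : \sum_(0 <= i < n.+2) (0 < i + k.+1) * t n (i + k.+1).-1 i = T n k by lia.
rewrite -sum_last; apply: eq_big_nat => i _.
by rewrite addnS /= mul1n.
Qed.

Lemma T_S0 n : T n.+1 0 = T n 0 + 2 * T n 1.
Proof.
rewrite T_split sum_last third -addnA; congr (_ + _).
rewrite big_nat_recl // mul0n add0n /T.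
rewrite (_ : \sum_(0 <= i < n.+1) (0 < i.+1 + 0) * t n (i.+1 + 0).-1 i.+1 =
             \sum_(0 <= i < n.+1) t n (i + 1) i); first lia.
apply: eq_big_nat => i _; by rewrite addn0 mul1n tsym addn1.
Qed.

Fixpoint E n k := match n with
  | 0 => (k == 0 : nat)
  | n'.+1 => match k with
             | 0 => E n' 1
             | k'.+1 => E n' k' + E n' k'.+1 + E n' k'.+2
             end
  end.

Lemma T_E n k : T n k = T n k.+1 + E n k.
Proof.
elim: n k => [|n IH] k.
  rewrite /T !big_nat1 /t !add0n.
  by case: k.
case: k => [|k] /=.
  rewrite T_S0 T_SS; have := IH 0; have := IH 1; lia.
rewrite !T_SS; have := IH k; have := IH k.+1; have := IH k.+2; have := IH k.+3; lia.
Qed.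

Lemma E_super a n k : E a 0 * E n k <= E (a + n) k.
Proof.
elim: n k => [|n IH] k.
  by case: k => [|k] /=; rewrite ?muln1 ?addn0 ?muln0.
rewrite addnS; case: k => [|k] /=; first exact: IH.
rewrite !mulnDr; apply: leq_add; [apply: leq_add|]; exact: IH.
Qed.

Lemma E14 : 'C(14, 7) < E 14 0. Proof. by vm_compute. Qed.
Lemma E12 : 4097 <= E 12 0. Proof. by vm_compute. Qed.

Lemma cb m : 'C((m.+1).*2, m.+1) <= 4 * 'C(m.*2, m).
Proof.
have h1 := mul_bin_diag (m.+1).*2 m.
have h2 := mul_bin_diag (m.*2.+1) m.
have h3 : 'C(m.*2.+1, m.*2.+1 - m) = 'C(m.*2.+1, m) by rewrite bin_sub //; lia.
rewrite (_ : m.*2.+1 - m = m.+1) in h3; last lia.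
rewrite (_ : ((m.+1).*2).-1 = m.*2.+1) in h1; last by rewrite doubleS.
rewrite (_ : (m.*2.+1).-1 = m.*2) in h2; last by [].
rewrite -h3 in h1.
have : m.+1 * (m.+1 * 'C((m.+1).*2, m.+1)) <= m.+1 * (m.+1 * (4 * 'C(m.*2, m))).
  rewrite -h1 (mulnCA _ ((m.+1).*2)) -h2. 
  rewrite doubleS. nia.
by rewrite !leq_pmul2l.
Qed.

Lemma cbd j d : 'C((j + d).*2, j + d) <= 4 ^ d * 'C(j.*2, j).
Proof.
elim: d => [|d IH]; first by rewrite addn0 expn0 mul1n.
rewrite addnS; apply: leq_trans (cb _) _.
rewrite expnS -mulnA leq_pmul2l //.
Qed.

Lemma central m : 4 <= m -> 'C(m.*2, m) < E (m.*2) 0.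
Proof.
elim: m {-2}m (leqnn m) => [|M IH] m hm h4; first lia.
case: (leqP 10 m) => h10.
  have [j hj0] : exists j, m = j + 6 by exists (m - 6); lia.
  subst m.
  have hj : 'C(j.*2, j) < E (j.*2) 0 by apply: IH; lia.
  have := cbd j 6.
  have := E_super 12 (j.*2) 0.
  rewrite (_ : 12 + j.*2 = (j + 6).*2); last lia.
  have := E12. rewrite expnE /=. nia.
have : m \in [:: 4; 5; 6; 7; 8; 9] by rewrite !inE; lia.
rewrite !inE => /orP[/eqP->|/orP[/eqP->|/orP[/eqP->|/orP[/eqP->|/orP[/eqP->|/eqP->]]]]].
- by vm_compute.
- by vm_compute.
- by vm_compute.
- exact: E14.
- apply: leq_trans (E_super 2 14 0). by vm_compute.
- apply: leq_trans (E_super 4 14 0). by vm_compute.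
Qed.

Lemma Eeven m : 0 < E (m.*2) 0.
Proof.
elim: m => [|m IH] //.
apply: leq_trans (E_super 2 (m.*2) 0); rewrite /= mul1n //.
Qed.

Lemma Eodd m : 0 < E (m.*2.+3) 0.
Proof.
apply: leq_trans (E_super 3 (m.*2) 0); rewrite /= mul1n; exact: Eeven.
Qed.

Lemma tail_zero n N F : N <= n.+1 -> (forall i, N <= i < n.+1 -> F i = 0) ->
  \sum_(0 <= i < n.+1) F i = \sum_(0 <= i < N) F i.
Proof.
move=> hN hF; rewrite (big_cat_nat _ (n := N)) //=.
suff -> : \sum_(N <= i < n.+1) F i = 0 by rewrite addn0.
by rewrite big_nat_cond big1 // => i /andP[hi _]; exact: hF.
Qed.

Lemma LHS_eq n M : n <= M.*2.+2 -> M.*2 < n ->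
  \sum_(0 <= i < M.+1) trinom n i.+1 (n - i.*2 - 1) i = T n 1.
Proof.
move=> h1 h2; rewrite /T (@tail_zero n M.+1); last 2 first.
- lia.
- move=> i hi; rewrite /t (@bin_small (n - (i + 1)) i) ?muln0 //; lia.
apply: eq_big_nat => i hi; rewrite trinom_t ?addn1 //; lia.
Qed.

Lemma RHS_odd n M : n = M.*2.+1 ->
  \sum_(0 <= i < M.+1) trinom n i (n - i.*2) i = T n 0.
Proof.
move=> h1; rewrite /T (@tail_zero n M.+1); last 2 first.
- lia.
- move=> i hi; rewrite /t (@bin_small (n - (i + 0)) i) ?muln0 //; lia.
apply: eq_big_nat => i hi; rewrite trinom_t ?addn0 //; lia.
Qed.

Lemma RHS_even n M : n = M.*2.+2 ->
  \sum_(0 <= i < M.+1) trinom n i (n - i.*2) i + 'C(n, M.+1) = T n 0.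
Proof.
move=> h1; rewrite /T (@tail_zero n M.+2); last 2 first.
- lia.
- move=> i hi; rewrite /t (@bin_small (n - (i + 0)) i) ?muln0 //; lia.
rewrite [in RHS]big_nat_recr //=; congr (_ + _).
  apply: eq_big_nat => i hi; rewrite trinom_t ?addn0 //; lia.
rewrite /t addn0 (_ : n - M.+1 = M.+1); last lia.
by rewrite binn muln1.
Qed.

Theorem lemma5p7 (n : nat) :
  (odd n && (3 <= n)) || (~~ odd n && (8 <= n)) ->
  \sum_(0 <= i < (n.-1)./2 .+1) trinom n i.+1 (n - i.*2 - 1) i <
  \sum_(0 <= i < (n.-1)./2 .+1) trinom n i (n - i.*2) i.
Proof.
case: n => [|n0] //=.
have hm := odd_double_half n0.
set M := n0./2 in hm *.
case ho: (odd n0) hm => /= hm H.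
-
  have hn : n0.+1 = M.*2.+2 by lia.
  rewrite LHS_eq; [|lia|lia].
  have := @RHS_even _ _ hn. rewrite hn.
  have := T_E (M.*2.+2) 0.
  have hc := @central M.+1 ltac:(lia).
  rewrite doubleS in hc. move=> e1 e2. lia.
- have hn : n0.+1 = M.*2.+1 by lia.
  rewrite LHS_eq; [|lia|lia].
  rewrite (@RHS_odd _ _ hn) hn.
  have := T_E (M.*2.+1) 0.
  have [M' hM'] : exists M', M = M'.+1 by exists M.-1; lia.
  rewrite hM' doubleS.
  have := Eodd M'. lia.
Qed.
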